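(* Let $0<\mu\le L$, $\kappa=L/\mu$, and $0<\sigma<1$. For $\eta>0$ define $$G(\eta)=\begin{bmatrix}\sigma+\eta\frac{L}{\mu} & \frac{\eta}{\mu} & \eta\frac{L}{\mu}\\ 2L+\eta\frac{L^2}{\mu} & \sigma+\eta\frac{L}{\mu} & \eta\frac{L^2}{\mu}\\ \eta\frac{L}{\mu} & \frac{\eta}{\mu} & 1-\eta\frac{\mu}{L}\end{bmatrix}.$$ If $0<\eta<\bar\eta=\dfrac{(1-\sigma)^2}{2(2-\sigma)(\kappa+\kappa^3)}$, then the spectral radius satisfies $\rho(G(\eta))<1$.
   Context: In the paper, $\mu$ and $L$ are the strong convexity and smoothness constants of the local cost functions ($\mu I\preceq\nabla^2 f_i\preceq LI$), $\sigma=\|W-\frac1N\mathbf{1}\mathbf{1}^T\|_2$ is the spectral norm associated with a symmetric doubly stochastic consensus matrix $W$ of a connected graph, and $G(\eta)$ is the matrix governing the Network-GIANT error recursion (consensus error, gradient-tracking error, optimality gap). $\rho(\cdot)$ denotes the spectral radius. *)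

(* Defs.v *)
From HB Require Import structures.
From mathcomp Require Import all_boot all_order all_algebra.
From mathcomp Require Import complex.
From mathcomp Require Import all_classical all_reals.
Set Implicit Arguments. Unset Strict Implicit. Unset Printing Implicit Defensive.
Import Order.TTheory GRing.Theory Num.Theory.
Local Open Scope ring_scope.
Local Open Scope classical_set_scope.

Definition spectral_radius (R : realType) (n : nat) (A : 'M[R]_n) : R :=
  sup [set complex.Re `|z| | z in
        [set z : R[i] | eigenvalue (map_mx (fun x : R => x%:C%C) A) z]].

Definition Gmat (R : realType) (mu L sigma eta : R) : 'M[R]_3 :=
  \matrix_(i < 3, j < 3)
   match nat_of_ord i, nat_of_ord j with
   | 0%N, 0%N => sigma + eta * (L / mu)
   | 0%N, 1%N => eta / mu
   | 0%N, _   => eta * (L / mu)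
   | 1%N, 0%N => 2 * L + eta * (L ^+ 2 / mu)
   | 1%N, 1%N => sigma + eta * (L / mu)
   | 1%N, _   => eta * (L ^+ 2 / mu)
   | _, 0%N   => eta * (L / mu)
   | _, 1%N   => eta / mu
   | _, _     => 1 - eta * (mu / L)
   end.

(* Main.v *)
Require Import Defs.
From HB Require Import structures.
From mathcomp Require Import all_boot all_order all_algebra.
From mathcomp Require Import complex.
From mathcomp Require Import all_classical all_reals.
From mathcomp.algebra_tactics Require Import ring lra.
Import Order.TTheory GRing.Theory Num.Theory.
Local Open Scope ring_scope.
Local Open Scope classical_set_scope.
Lemma eig_bound (R : realType) n (A : 'M[R]_n) (x : 'I_n -> R) (c : R) :
  (forall i j, 0 <= A i j) -> (forall i, 0 < x i) ->
  (forall i, \sum_j A i j * x j <= c * x i) ->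
  forall z : R[i], eigenvalue (map_mx (fun r : R => r%:C%C) A) z ->
  complex.Re `|z| <= c.
Proof.
move=> A0 x0 hc z /eigenvalueP [v hv vn0].
have hj : forall j, `|z| * `|v 0 j| <= \sum_i `|v 0 i| * (A i j)%:C%C.
  move=> j; have := hv; move/rowP/(_ j); rewrite !mxE => e.
  rewrite -normrM -e; apply: le_trans (ler_norm_sum _ _ _) _.
  apply: ler_sum => i _; rewrite mxE normrM [`|(A i j)%:C%C|]ger0_norm // ler0c; exact: A0.
have [j0 hj0] : exists j, v 0 j != 0.
  case: (pickP (fun j => v 0 j != 0)) => [j hj1|h]; first by exists j.
  move: vn0; rewrite (_ : v = 0) ?eqxx //; apply/rowP => j; rewrite !mxE.
  by apply/eqP; move: (h j) => /negbFE.
set S := \sum_j `|v 0 j| * (x j)%:C%C.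
have Spos : 0 < S.
  rewrite /S (bigD1 j0) //=; apply: (@lt_le_trans _ _ (`|v 0 j0| * (x j0)%:C%C)).
    by rewrite mulr_gt0 ?normr_gt0 // ltcR.
  rewrite lerDl; apply: sumr_ge0 => i _; rewrite mulr_ge0 // ler0c ltW //.
have key : `|z| * S <= c%:C%C * S.
  rewrite /S !mulr_sumr.
  apply: (@le_trans _ _ (\sum_j (\sum_i `|v 0 i| * (A i j)%:C%C) * (x j)%:C%C)).
    apply: ler_sum => j _; rewrite mulrA; apply: ler_wpM2r; last exact: hj.
    by rewrite ler0c ltW.
  under eq_bigr do rewrite mulr_suml.
  rewrite exchange_big /=; apply: ler_sum => i _.
  under eq_bigr do rewrite -mulrA.
  rewrite -mulr_sumr mulrCA; apply: ler_wpM2l => //.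
  under eq_bigr do rewrite -rmorphM.
  rewrite -rmorphM -rmorph_sum lecR; exact: hc.
have := key; rewrite ler_pM2r // lecE => /andP [_].
by rewrite /=.
Qed.

Lemma srad_lt1 (R : realType) n (A : 'M[R]_n) (x : 'I_n -> R) :
  (forall i j, 0 <= A i j) -> (forall i, 0 < x i) ->
  (forall i, \sum_j A i j * x j < x i) ->
  spectral_radius A < 1.
Proof.
move=> A0 x0 hr.
pose f i := (\sum_j A i j * x j) / x i.
pose c := \big[Num.max/0]_i f i.
have c1 : c < 1.
  apply: bigmax_lt => // i _; rewrite /f ltr_pdivrMr // mul1r; exact: hr.
have hc : forall i, \sum_j A i j * x j <= c * x i.
  move=> i; rewrite -[X in X <= _](@divfK _ (x i)) ?gt_eqF //.
  apply: ler_wpM2r; [exact: ltW | exact: le_bigmax].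
rewrite /spectral_radius.
set E := (X in sup X).
case: (pselect (E !=set0)) => [ne|e].
  apply: le_lt_trans c1; apply: ge_sup => // y [z hz <-].
  exact (@eig_bound R n A x c A0 x0 hc z hz).
have -> : E = set0.
  apply/seteqP; split => y // Hy; exfalso; apply: e; by exists y.
by rewrite sup0 ltr01.
Qed.

Lemma rows_alg (R : realType) (mu L sigma a u dl : R) :
  0 < mu -> 0 < L -> 0 < a ->
  let k := L / mu in let b := a * (k + k ^+ 3) in
  let w := u * k / b in let s := k ^+ 2 + k * w + dl / (a * k) in
  u < (1 - sigma) - b - dl -> 2 * b + b ^+ 2 + b * dl < u * ((1 - sigma) - b) ->
  0 < dl ->
  [/\ (sigma + a * (L / mu)) * 1 + (a / mu * (mu * w) + (a * (L / mu) * s + 0)) < 1,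
      (2 * L + a * (L ^+ 2 / mu)) * 1 +
        ((sigma + a * (L / mu)) * (mu * w) + (a * (L ^+ 2 / mu) * s + 0)) < mu * w &
      a * (L / mu) * 1 + (a / mu * (mu * w) + ((1 - a * (mu / L)) * s + 0)) < s].
Proof.
move=> mu0 L0 a0 k b w s h1 h2 dl0.
have k0 : 0 < k by rewrite /k divr_gt0.
have b0 : 0 < b by rewrite /b mulr_gt0 // addr_gt0 // exprn_gt0.
have mu0' : mu != 0 by rewrite gt_eqF.
have L0' : L != 0 by rewrite gt_eqF.
have a0' : a != 0 by rewrite gt_eqF.
have k0' : k != 0 by rewrite gt_eqF.
have hX : L * mu ^+ 2 + L ^+ 3 != 0.
  by rewrite gt_eqF // addr_gt0 // ?mulr_gt0 // exprn_gt0.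
split.
- have -> : (sigma + a * (L / mu)) * 1 + (a / mu * (mu * w) + (a * (L / mu) * s + 0))
     = 1 + (u - ((1 - sigma) - b - dl)).
    rewrite /s /w /b /k; field.
    by rewrite mu0' L0' a0' hX.
  lra.
- have -> : (2 * L + a * (L ^+ 2 / mu)) * 1 +
        ((sigma + a * (L / mu)) * (mu * w) + (a * (L ^+ 2 / mu) * s + 0))
     = mu * w + (mu * k / b) * ((2 * b + b ^+ 2 + b * dl) - u * ((1 - sigma) - b)).
    rewrite /s /w /b /k; field.
    by rewrite mu0' L0' a0' hX.
  have t0 : 0 < mu * k / b by rewrite divr_gt0 // mulr_gt0.
  nra.
- have -> : a * (L / mu) * 1 + (a / mu * (mu * w) + ((1 - a * (mu / L)) * s + 0))
     = s - dl / k ^+ 2.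
    rewrite /s /w /b /k; field.
    by rewrite mu0' L0' a0' hX.
  have t0 : 0 < dl / k ^+ 2 by rewrite divr_gt0 // exprn_gt0.
  lra.
Qed.

Theorem theorem2 (R : realType) (mu L sigma eta : R) :
  0 < mu -> mu <= L -> 0 < sigma -> sigma < 1 -> 0 < eta ->
  let kappa := L / mu in
  eta < (1 - sigma) ^+ 2 / (2 * (2 - sigma) * (kappa + kappa ^+ 3)) ->
  spectral_radius (Gmat mu L sigma eta) < 1.
Proof.
move=> mu0 muL s0 s1 a0 k ha.
have L0 : 0 < L by apply: lt_le_trans muL.
have k0 : 0 < k by rewrite /k divr_gt0.
have k1 : 1 <= k by rewrite /k ler_pdivlMr // mul1r.
pose d := 1 - sigma.
pose b := eta * (k + k ^+ 3).
have T0 : 0 < k + k ^+ 3 by rewrite addr_gt0 // exprn_gt0.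
have b0 : 0 < b by rewrite /b mulr_gt0.
have hb : b * (2 * (1 + d)) < d ^+ 2.
  move: ha; rewrite ltr_pdivlMr; last by rewrite mulr_gt0 // mulr_gt0 //; lra.
  by rewrite /b /d; lra.
pose g := d ^+ 2 - 2 * b * (1 + d).
have g0 : 0 < g by rewrite /g; lra.
have d0 : 0 < d by rewrite /d; lra.
pose dl := g / (2 * d).
have dl0 : 0 < dl by rewrite /dl divr_gt0 // mulr_gt0 //; lra.
have dld : dl * d * 2 = g by rewrite /dl; field; rewrite gt_eqF.
pose D := d - b.
have D0 : 0 < D by rewrite /D; nra.
pose Q := (2 * b + b ^+ 2 + b * dl) / D.
have QD : Q * D = 2 * b + b ^+ 2 + b * dl by rewrite /Q divfK // gt_eqF.
have QDd : Q < D - dl.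
  rewrite /Q ltr_pdivrMr //.
  rewrite /D; rewrite /g in dld; nra.
have Q0 : 0 < Q by rewrite /Q divr_gt0 //; nra.
pose u := ((D - dl) + Q) / 2.
have h1 : u < d - b - dl by rewrite /u -/D; lra.
have h2 : 2 * b + b ^+ 2 + b * dl < u * (d - b).
  rewrite -QD /u -/D; nra.
have [r1 r2 r3] := @rows_alg R mu L sigma eta u dl mu0 L0 a0 h1 h2 dl0.
pose w := u * k / b.
pose s := k ^+ 2 + k * w + dl / (eta * k).
have u0 : 0 < u by rewrite /u; lra.
have w0 : 0 < w by rewrite /w divr_gt0 // mulr_gt0.
have s0' : 0 < s.
  have t1 : 0 < k ^+ 2 by rewrite exprn_gt0.
  have t2 : 0 < k * w by rewrite mulr_gt0.
  have t3 : 0 < dl / (eta * k) by rewrite divr_gt0 // mulr_gt0.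
  rewrite /s; lra.
have a1 : eta * (mu / L) <= 1.
  have bb : b * 2 <= b * (2 * (1 + d)) by rewrite ler_pM2l //; lra.
  have d1 : d < 1 by rewrite /d; lra.
  have dd : d ^+ 2 <= 1 by rewrite expr2; nra.
  have e3 : 0 < eta * k ^+ 3 by rewrite mulr_gt0 // exprn_gt0.
  have bk : b = eta * k + eta * k ^+ 3 by rewrite /b mulrDr.
  have : eta * k < 1 by lra.
  have : mu / L <= 1 by rewrite ler_pdivrMr // mul1r.
  have : 0 < mu / L by rewrite divr_gt0.
  nra.
apply: (@srad_lt1 R 3 _ (fun i : 'I_3 => match nat_of_ord i with 0%N => 1 | 1%N => mu * w | _ => s end)).
- have e1 : 0 <= eta * (L / mu) by rewrite mulr_ge0 // ltW // divr_gt0.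
  have e2 : 0 <= eta / mu by rewrite ltW // divr_gt0.
  have e3 : 0 <= eta * (L ^+ 2 / mu) by rewrite mulr_ge0 // ltW // divr_gt0 // exprn_gt0.
  case=> [[|[|[|m]]] hi] //; case=> [[|[|[|m']]] hj] //; rewrite mxE /=; lra.
- case=> [[|[|[|m]]] hi] //=; by first [exact: ltr01 | exact: mulr_gt0 | exact: s0'].
- case=> [[|[|[|m]]] hi] //; rewrite !big_ord_recl big_ord0 !mxE /=.
  + exact: r1.
  + exact: r2.
  + exact: r3.
Qed.
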